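(* (1) Suppose there are a function $D:\mathbb{N}\rightarrow\mathbb{R}_{>0}$ and a constant $C>0$ such that for every $n$, every (possibly partial) Boolean function $F:X\rightarrow\{0,1\}$ with $X\subseteq\{0,1\}^n$, and every nondeterministic quantum query algorithm for $F$ using $T$ queries, there is a nondeterministic quantum communication protocol for $F^{\oplus}$ using at most $C\,D(n)\,T$ qubits. Then $D(n)=\Omega(\log n)$, i.e., there is $c>0$ with $D(n)\ge c\log n$ for all sufficiently large $n$. The same conclusion holds with ''nondeterministic'' replaced throughout by ''exact''. (2) Suppose there are a function $D:\mathbb{N}\rightarrow\mathbb{R}_{>0}$ and a constant $C>0$ such that for every $n$, every $F:\{0,1\}^n\rightarrow\{0,1\}$, and every unbounded error quantum query algorithm for $F$ using $T$ queries, there is an unbounded error quantum communication protocol for $F^{\wedge}$ using at most $C\,D(n)\,T$ qubits. Then $D(n)=\Omega(\log n)$.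
   Context: A quantum query algorithm for $F$ alternates input-independent unitaries with the oracle $O_x:|i,b,z\rangle\mapsto|i,b\oplus x_i,z\rangle$ and measures an output bit. It is exact if it always outputs $F(x)$; nondeterministic if for every input in the domain it outputs 1 with positive probability exactly when $F(x)=1$; unbounded error if on every input in the domain it outputs $F(x)$ with probability strictly greater than $1/2$. Quantum communication protocols are two-party protocols exchanging qubits, with the same three correctness notions relative to the distributed function. For $F$ on $n$ bits, $F^{\oplus}(x,y)=F(x\oplus y)$ (Alice holds $x$, Bob holds $y$; defined when $x\oplus y$ is in the domain of $F$) and $F^{\wedge}(x,y)=F(x\wedge y)$ with bitwise AND. *)

(* Defs.v *)
From mathcomp Require Import all_boot all_order all_algebra.
From mathcomp.real_closed Require Import complex.
From mathcomp Require Import reals exp.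
Import GRing.Theory Num.Theory.
Set Implicit Arguments. Unset Strict Implicit. Unset Printing Implicit Defensive.
Local Open Scope ring_scope.

Section Quantum.
Variable R : realType.
Local Notation C := (R[i]).

Definition bits (n : nat) := {ffun 'I_n -> bool}.
Definition bxor n (x y : bits n) : bits n := [ffun i => x i (+) y i].
Definition band n (x y : bits n) : bits n := [ffun i => x i && y i].

Definition vec (S : finType) := S -> C.
Definition op (S : finType) := S -> S -> C.     (* matrix U s t = <s|U|t> *)
Definition apply (S : finType) (U : op S) (v : vec S) : vec S :=
  fun s => \sum_t U s t * v t.
Definition unitary (S : finType) (U : op S) : Prop :=
  forall s t, \sum_u (U u s)^* * U u t = (s == t)%:R.
Definition unit_vec (S : finType) (v : vec S) : Prop := \sum_s `|v s| ^+ 2 = 1.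
Definition prob (S : finType) (v : vec S) (acc : pred S) : C :=
  \sum_(s | acc s) `|v s| ^+ 2.

(* basis states |i,b,z> : i query index, b answer bit, z workspace *)
Definition QS (n w : nat) := ('I_n * bool * 'I_w)%type.
Definition omap n w (x : bits n) (t : QS n w) : QS n w :=
  (t.1.1, t.1.2 (+) x t.1.1, t.2).
Definition oracle n w (x : bits n) : op (QS n w) :=
  fun s t => (s == omap x t)%:R.
Fixpoint qrun n w (U : nat -> op (QS n w)) (x : bits n) (psi0 : vec (QS n w))
  (k : nat) : vec (QS n w) :=
  match k with
  | 0 => apply (U 0%N) psi0
  | k'.+1 => apply (U k) (apply (oracle x) (qrun U x psi0 k'))
  end.
Definition qaccept n w (T : nat) (U : nat -> op (QS n w)) (psi0 : vec (QS n w))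
  (acc : pred (QS n w)) (x : bits n) : C := prob (qrun U x psi0 T) acc.
Definition valid_qalg n w (T : nat) (U : nat -> op (QS n w)) (psi0 : vec (QS n w)) : Prop :=
  unit_vec psi0 /\ forall j, (j <= T)%N -> unitary (U j).

Inductive mode := Exact | Nondet | Unbounded.
(* p = probability of outputting 1, b = the correct value *)
Definition correct (m : mode) (p : C) (b : bool) : Prop :=
  match m with
  | Exact => p = (b : nat)%:R
  | Nondet => (0 < p) = b
  | Unbounded => if b then 1 / 2%:R < p else p < 1 / 2%:R
  end.

Definition qalg_for (m : mode) n w (dom : pred (bits n)) (F : bits n -> bool)
  (T : nat) (U : nat -> op (QS n w)) (psi0 : vec (QS n w)) (acc : pred (QS n w)) : Prop :=
  valid_qalg T U psi0 /\ forall x, dom x -> correct m (qaccept T U psi0 acc x) (F x).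

(* Global space: Alice's register 'I_a.+1, one-qubit channel bool,
   Bob's register 'I_b.+1; initial state |0,0,0> (no prior entanglement).
   Step j is a unitary of Alice on (A,channel) depending on x if j is even,
   of Bob on (channel,B) depending on y if j is odd.  Between consecutive
   steps the channel qubit is sent, so a k+1-step protocol communicates
   exactly k qubits.  The party performing the last step measures its own
   registers in the computational basis. *)
Definition PS (a b : nat) := ('I_a.+1 * bool * 'I_b.+1)%type.
Definition AS (a : nat) := ('I_a.+1 * bool)%type.
Definition BS (b : nat) := (bool * 'I_b.+1)%type.
Definition liftA a b (U : op (AS a)) : op (PS a b) :=
  fun s t => U s.1 t.1 * (s.2 == t.2)%:R.
Definition liftB a b (V : op (BS b)) : op (PS a b) :=
  fun s t => V (s.1.2, s.2) (t.1.2, t.2) * (s.1.1 == t.1.1)%:R.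
Definition pinit a b : vec (PS a b) := fun s => (s == (ord0, false, ord0))%:R.
Definition pstep n a b (UA : nat -> bits n -> op (AS a))
  (UB : nat -> bits n -> op (BS b)) (x y : bits n) (j : nat) : op (PS a b) :=
  if odd j then liftB (UB j y) else liftA (UA j x).
Fixpoint prun n a b (UA : nat -> bits n -> op (AS a)) (UB : nat -> bits n -> op (BS b)) (x y : bits n) (k : nat) : vec (PS a b) :=
  match k with
  | 0 => apply (pstep UA UB x y 0) (@pinit a b)
  | k'.+1 => apply (pstep UA UB x y k) (prun UA UB x y k')
  end.
Definition paccept n a b (k : nat) (UA : nat -> bits n -> op (AS a)) (UB : nat -> bits n -> op (BS b)) (accA : pred (AS a))
  (accB : pred (BS b)) (x y : bits n) : C :=
  prob (prun UA UB x y k)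
    (fun s : PS a b => if odd k then accB (s.1.2, s.2) else accA s.1).
Definition valid_prot n a b (UA : nat -> bits n -> op (AS a))
  (UB : nat -> bits n -> op (BS b)) : Prop :=
  forall j x, unitary (UA j x) /\ unitary (UB j x).

(* If [partial] is false, only
   total functions F are considered. *)
Definition simulation (m : mode) (comb : forall n, bits n -> bits n -> bits n)
  (partial : bool) (D : nat -> R) (Cc : R) : Prop :=
  forall (n : nat) (dom : pred (bits n)) (F : bits n -> bool),
    (~~ partial -> forall x, dom x) ->
  forall (w T : nat) (U : nat -> op (QS n w)) (psi0 : vec (QS n w)) (acc : pred (QS n w)),
    qalg_for m dom F T U psi0 acc ->
    exists (a b k : nat) (UA : nat -> bits n -> op (AS a))
           (UB : nat -> bits n -> op (BS b))
           (accA : pred (AS a)) (accB : pred (BS b)),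
      [/\ valid_prot UA UB,
          (k%:R <= Cc * D n * T%:R :> R) &
          forall x y, dom (comb n x y) ->
            correct m (paccept k UA UB accA accB x y) (F (comb n x y))].

Definition Omega_log (D : nat -> R) : Prop :=
  exists c : R, 0 < c /\ exists N : nat, forall n : nat, (N <= n)%N -> c * ln (n%:R) <= D n.

End Quantum.

(* Main.v *)
Require Import Defs.
From mathcomp Require Import all_boot all_order all_algebra.
From mathcomp.real_closed Require Import complex.
From mathcomp Require Import reals exp.
From mathcomp Require Import ring lra.
Import Order.TTheory GRing.Theory Num.Theory.
Set Implicit Arguments. Unset Strict Implicit. Unset Printing Implicit Defensive.
Local Open Scope ring_scope.



Lemma kern_ex (F : fieldType) m K (A : 'M[F]_(m,K)) : (K < m)%N ->
  exists2 l : 'rV_m, l != 0 & l *m A = 0.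
Proof.
move=> lt.
have rk : (0 < \rank (kermx A))%N.
  by rewrite mxrank_ker subn_gt0 (leq_ltn_trans (rank_leq_col A)).
have nz : kermx A != 0 by rewrite -mxrank_eq0 -lt0n.
have [i Hi] : exists i, row i (kermx A) != 0.
  apply/existsP; apply: contraR nz; rewrite negb_exists => /forallP H.
  by apply/eqP/row_matrixP => i; rewrite row0; apply/eqP; move: (H i); rewrite negbK.
exists (row i (kermx A)) => //.
by rewrite -row_mul mulmx_ker row0.
Qed.

Lemma lin_comb (F : fieldType) m K (f : 'I_K -> 'I_m -> F) (g : 'I_K -> F)
  (l : 'rV_m) : l *m (\matrix_(i, r) f r i) = 0 ->
  \sum_i l 0 i * (\sum_r f r i * g r) = 0.
Proof.
move=> H.
have E : forall r, \sum_i l 0 i * f r i = 0.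
  move=> r; move/matrixP: H => /(_ 0 r); rewrite !mxE => E; rewrite -[RHS]E.
  by apply: eq_bigr => i _; rewrite mxE.
rewrite (eq_bigr (fun i => \sum_r l 0 i * f r i * g r)); last first.
  by move=> i _; rewrite mulr_sumr; apply: eq_bigr => r _; rewrite mulrA.
rewrite exchange_big /= big1 // => r _.
by rewrite -mulr_suml E mul0r.
Qed.

Lemma diag_rank (F : fieldType) m K (f : 'I_K -> 'I_m -> F) (g : 'I_K -> 'I_m -> F) :
  (forall i j, i != j -> \sum_r f r i * g r j = 0) ->
  (forall i, \sum_r f r i * g r i != 0) -> (m <= K)%N.
Proof.
move=> Hoff Hdiag; rewrite leqNgt; apply/negP => lt.
have [l lnz lA] := kern_ex (\matrix_(i, r) f r i) lt.
move/negP: lnz; apply; apply/eqP/rowP => j; rewrite mxE.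
have := lin_comb (fun r => g r j) lA.
rewrite (bigD1 j) //= [X in _ + X]big1 ?addr0; last by move=> i ij /=; rewrite (Hoff i j) ?mulr0.
by move/eqP; rewrite mulf_eq0 (negbTE (Hdiag j)) orbF => /eqP.
Qed.

Lemma vc_rank (R : realFieldType) n K (f : 'I_K -> 'I_n -> R)
  (g : 'I_K -> {ffun 'I_n -> bool} -> R) :
  (forall i (y : {ffun 'I_n -> bool}), if y i then 0 < \sum_r f r i * g r y else \sum_r f r i * g r y < 0) ->
  (n <= K)%N.
Proof.
move=> H; rewrite leqNgt; apply/negP => lt.
have [l lnz lA] := kern_ex (\matrix_(i, r) f r i) lt.
pose y := [ffun i => 0 < l 0 i].
have := lin_comb (fun r => g r y) lA.
have pos : forall i, 0 <= l 0 i * \sum_r f r i * g r y.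
  move=> i; have := H i y; rewrite ffunE.
  case: ifP => Hl Hs; first by rewrite mulr_ge0 // ltW.
  by rewrite mulr_le0 // ?(ltW Hs) // leNgt Hl.
move/eqP; rewrite psumr_eq0 /=; last by move=> i _; apply: pos.
move/allP => Hall; move/negP: lnz; apply; apply/eqP/rowP => j; rewrite mxE.
have := Hall j (mem_index_enum j); rewrite mulf_eq0 => /orP [/eqP //|].
move=> /eqP E; have := H j y; rewrite E; case: (y j); by rewrite ltxx.
Qed.

Lemma vc_rank_c (R : realFieldType) n K (f : 'I_K -> 'I_n -> R)
  (g : 'I_K -> {ffun 'I_n -> bool} -> R) (c : R) :
  (forall i (y : {ffun 'I_n -> bool}),
     if y i then c < \sum_r f r i * g r y else \sum_r f r i * g r y < c) ->
  (n <= K.+1)%N.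
Proof.
move=> H.
pose f' (r : 'I_K.+1) i := if unlift ord0 r is Some r' then f r' i else 1.
pose g' (r : 'I_K.+1) y := if unlift ord0 r is Some r' then g r' y else - c.
apply: (@vc_rank R n K.+1 f' g') => i y.
rewrite big_ord_recl /f' /g' unlift_none.
under eq_bigr do rewrite liftK.
have := H i y; case: (y i) => Hy.
  by rewrite mul1r addrC subr_gt0.
by rewrite mul1r addrC subr_lt0.
Qed.

Lemma to_ord (V : nmodType) (I : finType) (h : I -> V) :
  \sum_i h i = \sum_(j < #|I|) h (enum_val j).
Proof. by rewrite (reindex (@enum_val I I)) //; exact: onW_bij (enum_val_bij I). Qed.

Lemma sum_pair (V : nmodType) (I J : finType) (F : I * J -> V) :
  \sum_p F p = \sum_i \sum_j F (i, j).
Proof. by rewrite pair_big; apply: eq_bigr => -[]. Qed.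

Section Prot.
Variable R : realType.
Local Notation C := (R[i]).

Lemma sum_delta (T : finType) (c : T) (F : T -> C) :
  \sum_t ((c == t)%:R * F t) = F c.
Proof.
rewrite (bigD1 c) //= eqxx mul1r big1 ?addr0 // => t /negbTE.
by rewrite eq_sym => ->; rewrite mul0r.
Qed.


Variables (n a b : nat).

Lemma sumPS (F : PS a b -> C) :
  \sum_t F t = \sum_(al : 'I_a.+1) \sum_(c : bool) \sum_(be : 'I_b.+1) F ((al, c), be).
Proof.
by rewrite pair_bigA pair_bigA; apply: eq_bigr => -[[al c] be] _.
Qed.

Definition decomp (psi : bits n -> bits n -> vec R (PS a b)) (K : nat) :=
  exists (I : finType) (f : I -> bits n -> 'I_a.+1 -> bool -> C)
         (g : I -> bits n -> bool -> 'I_b.+1 -> C),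
    (#|I| <= K)%N /\ forall x y al c be,
      psi x y ((al, c), be) = \sum_r f r x al c * g r y c be.

Lemma decomp_init : decomp (fun _ _ => @pinit R a b) 1.
Proof.
exists 'I_1, (fun _ _ al c => ((al == ord0) && (c == false))%:R),
  (fun _ _ c be => (be == ord0)%:R); split; first by rewrite card_ord.
move=> x y al c be; rewrite big_ord1 /pinit.
by rewrite !xpair_eqE; case: (al == ord0); case: (c == false); case: (be == ord0);
  rewrite /= ?mul1r ?mul0r.
Qed.

Lemma decompA psi K (U : bits n -> op R (AS a)) : decomp psi K ->
  decomp (fun x y => apply (liftA (U x)) (psi x y)) (K.*2).
Proof.
move=> [I [f [g [cI E]]]].
exists (I * bool)%type,
  (fun p x al c => \sum_(al' : 'I_a.+1) U x (al, c) (al', p.2) * f p.1 x al' p.2),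
  (fun p y c be => g p.1 y p.2 be); split.
  by rewrite card_prod card_bool muln2 leq_double.
move=> x y al c be; rewrite /apply /liftA sumPS /=.
rewrite sum_pair /=.
transitivity (\sum_(al0 < a.+1) \sum_c0 \sum_r
    U x (al, c) (al0, c0) * (f r x al0 c0 * g r y c0 be)).
  apply: eq_bigr => al0 _; apply: eq_bigr => c0 _.
  rewrite (eq_bigr (fun be0 => (be == be0)%:R * (U x (al, c) (al0, c0) * psi x y (al0, c0, be0)))).
    by rewrite sum_delta E mulr_sumr.
  by move=> be0 _; rewrite mulrCA mulrA.
rewrite exchange_big /=.
under eq_bigr do rewrite exchange_big /=.
rewrite exchange_big /=; apply: eq_bigr => r _; apply: eq_bigr => c0 _.
by rewrite mulr_suml; apply: eq_bigr => al0 _; rewrite mulrA.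
Qed.

Lemma decompB psi K (V : bits n -> op R (BS b)) : decomp psi K ->
  decomp (fun x y => apply (liftB (V y)) (psi x y)) (K.*2).
Proof.
move=> [I [f [g [cI E]]]].
exists (I * bool)%type,
  (fun p x al c => f p.1 x al p.2),
  (fun p y c be => \sum_(be' : 'I_b.+1) V y (c, be) (p.2, be') * g p.1 y p.2 be'); split.
  by rewrite card_prod card_bool muln2 leq_double.
move=> x y al c be; rewrite /apply /liftB sumPS /=.
rewrite sum_pair /=.
transitivity (\sum_c0 \sum_(be0 < b.+1) \sum_r
    V y (c, be) (c0, be0) * (f r x al c0 * g r y c0 be0)).
  rewrite (eq_bigr (fun al0 => (al == al0)%:R * \sum_c0 \sum_(be0 < b.+1)
     V y (c, be) (c0, be0) * psi x y (al0, c0, be0))).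
    rewrite sum_delta; apply: eq_bigr => c0 _; apply: eq_bigr => be0 _.
    by rewrite E mulr_sumr.
  move=> al0 _; rewrite mulr_sumr; apply: eq_bigr => c0 _.
  rewrite mulr_sumr; apply: eq_bigr => be0 _.
  by rewrite mulrCA mulrA [_ * (al == al0)%:R]mulrC.
rewrite (eq_bigr (fun c0 => \sum_r \sum_(be0 < b.+1) V y (c, be) (c0, be0) * (f r x al c0 * g r y c0 be0))); last by move=> c0 _; rewrite exchange_big.
rewrite exchange_big /=; apply: eq_bigr => r _; apply: eq_bigr => c0 _.
by rewrite mulr_sumr; apply: eq_bigr => be0 _; rewrite mulrCA.
Qed.

Lemma decomp_ext psi psi' K : (forall x y s, psi x y s = psi' x y s) ->
  decomp psi K -> decomp psi' K.
Proof.
move=> H [I [f [g [cI E]]]]; exists I, f, g; split => // x y al c be.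
by rewrite -H E.
Qed.

Lemma prun_dec (UA : nat -> bits n -> op R (AS a)) (UB : nat -> bits n -> op R (BS b)) k :
  decomp (fun x y => prun UA UB x y k) (2 ^ k.+1).
Proof.
elim: k => [|k IH].
  exact: (decomp_ext _ (decompA (fun x => UA 0%N x) decomp_init)).
rewrite expnS mul2n.
case Ho: (odd k.+1).
  apply: (decomp_ext _ (decompB (fun y => UB k.+1 y) IH)) => x y s.
  by rewrite /= /pstep Ho.
apply: (decomp_ext _ (decompA (fun x => UA k.+1 x) IH)) => x y s.
by rewrite /= /pstep Ho.
Qed.

Lemma prob_dec psi K (PA : 'I_a.+1 -> bool -> bool) (PB : bool -> 'I_b.+1 -> bool) :
  decomp psi K ->
  exists (I : finType) (F : I -> bits n -> C) (G : I -> bits n -> C),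
    (#|I| <= (K * K).*2)%N /\ forall x y,
    \sum_(s : PS a b | PA s.1.1 s.1.2 && PB s.1.2 s.2) `|psi x y s| ^+ 2
      = \sum_i F i x * G i y.
Proof.
move=> [I [f [g [cI E]]]].
exists ((I * I) * bool)%type,
  (fun p x => \sum_(al : 'I_a.+1) (PA al p.2)%:R * (f p.1.1 x al p.2 * (f p.1.2 x al p.2)^*)),
  (fun p y => \sum_(be : 'I_b.+1) (PB p.2 be)%:R * (g p.1.1 y p.2 be * (g p.1.2 y p.2 be)^*)).
split.
  by rewrite !card_prod card_bool muln2 leq_double leq_mul.
move=> x y; rewrite big_mkcond /= sumPS /= sum_pair /=.
transitivity (\sum_(al < a.+1) \sum_c \sum_(be < b.+1) \sum_r \sum_r'
   (PA al c)%:R * (PB c be)%:R * ((f r x al c * g r y c be) * (f r' x al c * g r' y c be)^*)).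
  apply: eq_bigr => al _; apply: eq_bigr => c _; apply: eq_bigr => be _.
  rewrite normCK E rmorph_sum /=.
  case: (PA al c); case: (PB c be) => /=; rewrite ?mulr0n ?mulr1n; last 3 first.
  - by rewrite big1 // => r _; rewrite big1 // => r' _; rewrite ?mul0r ?mulr0 ?mul0r.
  - by rewrite big1 // => r _; rewrite big1 // => r' _; rewrite ?mul0r ?mulr0 ?mul0r.
  - by rewrite big1 // => r _; rewrite big1 // => r' _; rewrite ?mul0r ?mulr0 ?mul0r.
  rewrite mulr_suml; apply: eq_bigr => r _; rewrite mulr_sumr.
  by apply: eq_bigr => r' _; rewrite !mul1r.
rewrite sum_pair /=.
transitivity (\sum_r \sum_r' \sum_c \sum_(al < a.+1) \sum_(be < b.+1)
   (PA al c)%:R * (PB c be)%:R * ((f r x al c * g r y c be) * (f r' x al c * g r' y c be)^*)); last first.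
  apply: eq_bigr => r _; apply: eq_bigr => r' _; apply: eq_bigr => c _.
  rewrite mulr_suml; apply: eq_bigr => al _; rewrite mulr_sumr; apply: eq_bigr => be _.
  by rewrite rmorphM /=; ring.
under eq_bigr => al _ do under eq_bigr => c _ do rewrite exchange_big /=.
under eq_bigr => al _ do under eq_bigr => c _ do under eq_bigr => r _ do rewrite exchange_big /=.
under eq_bigr => al _ do rewrite exchange_big /=.
under eq_bigr => al _ do under eq_bigr => r _ do rewrite exchange_big /=.
rewrite exchange_big /=.
under eq_bigr => r _ do rewrite exchange_big /=.
by under eq_bigr => r _ do under eq_bigr => r' _ do rewrite exchange_big /=.
Qed.

Lemma paccept_dec k (UA : nat -> bits n -> op R (AS a)) (UB : nat -> bits n -> op R (BS b))
  accA accB :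
  exists (I : finType) (F : I -> bits n -> C) (G : I -> bits n -> C),
    (#|I| <= (2 ^ k.+1 * 2 ^ k.+1).*2)%N /\ forall x y,
    paccept k UA UB accA accB x y = \sum_i F i x * G i y.
Proof.
have [I [F [G [cI E]]]] := prob_dec (fun al c => if odd k then true else accA (al, c))
  (fun c be => if odd k then accB (c, be) else true) (prun_dec UA UB k).
exists I, F, G; split => // x y; rewrite -E /paccept /prob.
apply: eq_bigl => -[[al c] be]; case: (odd k) => /=; by rewrite ?andbT.
Qed.

Lemma comm_lb_diag k (UA : nat -> bits n -> op R (AS a)) (UB : nat -> bits n -> op R (BS b))
  accA accB m (X Y : 'I_m -> bits n) :
  (forall i j, i != j -> paccept k UA UB accA accB (X i) (Y j) = 0) ->
  (forall i, paccept k UA UB accA accB (X i) (Y i) != 0) ->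
  (m <= (2 ^ k.+1 * 2 ^ k.+1).*2)%N.
Proof.
move=> Hoff Hd.
have [I [F [G [cI E]]]] := paccept_dec k UA UB accA accB.
apply: leq_trans cI.
apply: (@diag_rank C m #|I| (fun r i => F (enum_val r) (X i)) (fun r j => G (enum_val r) (Y j))).
  by move=> i j ij; rewrite -(to_ord (fun r => F r (X i) * G r (Y j))) -E Hoff.
by move=> i; rewrite -(to_ord (fun r => F r (X i) * G r (Y i))) -E Hd.
Qed.

End Prot.

Section Real.
Variable R : realType.
Local Notation C := (R[i]).
Local Notation ReC := (@complex.Re R).
Local Notation ImC := (@complex.Im R).

Lemma ReD (x y : C) : ReC (x + y) = ReC x + ReC y. Proof. by case: x => ? ?; case: y => ? ?; reflexivity. Qed.
Lemma ReM (x y : C) : ReC (x * y) = ReC x * ReC y - ImC x * ImC y. Proof. by case: x => ? ?; case: y => ? ?; reflexivity. Qed.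
Lemma Re_sum (I : finType) (h : I -> C) : ReC (\sum_i h i) = \sum_i ReC (h i).
Proof. by apply: (big_morph _ ReD). Qed.
Lemma half_C' : (1 / 2%:R : C) = ((1 / 2%:R : R)%:C)%C.
Proof. by rewrite fmorph_div rmorph1 rmorph_nat. Qed.

Lemma vc_rank_fin n (J : finType) (f : J -> 'I_n -> R)
  (g : J -> {ffun 'I_n -> bool} -> R) (c : R) :
  (forall i (y : {ffun 'I_n -> bool}),
     if y i then c < \sum_r f r i * g r y else \sum_r f r i * g r y < c) ->
  (n <= #|J|.+1)%N.
Proof.
move=> H; apply: (@vc_rank_c R n #|J| (fun r i => f (enum_val r) i) (fun r y => g (enum_val r) y) c).
move=> i y; rewrite -(to_ord (fun r => f r i * g r y)); exact: H.
Qed.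

Lemma comm_lb_vc n a b k (UA : nat -> bits n -> op R (AS a)) (UB : nat -> bits n -> op R (BS b))
  accA accB (X : 'I_n -> bits n) :
  (forall i (y : bits n), if y i then 1 / 2%:R < paccept k UA UB accA accB (X i) y
      else paccept k UA UB accA accB (X i) y < 1 / 2%:R) ->
  (n <= ((2 ^ k.+1 * 2 ^ k.+1).*2).*2.+1)%N.
Proof.
move=> H.
have [I [F [G [cI E]]]] := paccept_dec k UA UB accA accB.
have Hn := @vc_rank_fin n (I * bool)%type
     (fun r i => if r.2 then ReC (F r.1 (X i)) else - ImC (F r.1 (X i)))
     (fun r y => if r.2 then ReC (G r.1 y) else ImC (G r.1 y))
     (1 / 2%:R).
apply: leq_trans (Hn _) _; last first.
  by rewrite card_prod card_bool ltnS muln2 leq_double.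
move=> i y.
have -> : \sum_(r : I * bool) (if r.2 then ReC (F r.1 (X i)) else - ImC (F r.1 (X i))) *
     (if r.2 then ReC (G r.1 y) else ImC (G r.1 y))
     = ReC (paccept k UA UB accA accB (X i) y).
  rewrite E Re_sum.
  rewrite sum_pair; apply: eq_bigr => r _; rewrite big_bool /= ReM.
  by rewrite mulNr.
have := H i y; rewrite half_C'; case: (y i); rewrite ltcE /= => /andP [_ //].
Qed.

End Real.


Section Q.
Variable R : realType.
Local Notation C := (R[i]).

Lemma sum_delta' (V : pzSemiRingType) (T : finType) (c : T) (F : T -> V) :
  \sum_t ((c == t)%:R * F t) = F c.
Proof.
rewrite (bigD1 c) //= eqxx mul1r big1 ?addr0 // => t /negbTE.
by rewrite eq_sym => ->; rewrite mul0r.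
Qed.

Definition idop (S : finType) : op R S := fun s t => (s == t)%:R.

Lemma apply_id (S : finType) (v : vec R S) s : apply (@idop S) v s = v s.
Proof. exact: sum_delta'. Qed.

Lemma unitary_id (S : finType) : unitary (@idop S).
Proof.
move=> s t; rewrite /idop.
rewrite (eq_bigr (fun u => (s == u)%:R * (u == t)%:R)); last first.
  by move=> u _; rewrite conjC_nat eq_sym.
by rewrite sum_delta'.
Qed.

Lemma conjR (x : R) : ((x%:C)%C)^* = (x%:C)%C. Proof. exact: conjc_real. Qed.

Lemma normR2 (x : R) : `|(x%:C)%C| ^+ 2 = ((x ^+ 2)%:C)%C.
Proof. by rewrite normCK conjR -rmorphM expr2. Qed.

Lemma sqC (r : R) : 0 <= r -> `|((Num.sqrt r)%:C)%C| ^+ 2 = (r%:C)%C.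
Proof. by move=> r0; rewrite normR2 sqr_sqrtr. Qed.

Lemma half_C : (1 / 2%:R : C) = ((1 / 2%:R : R)%:C)%C.
Proof. by rewrite fmorph_div rmorph1 rmorph_nat. Qed.

Lemma sumC (T : finType) (P : pred T) (f : T -> R) :
  \sum_(t | P t) ((f t)%:C)%C = ((\sum_(t | P t) f t)%:C)%C.
Proof. by rewrite rmorph_sum. Qed.

Variables (n w : nat).

Lemma omapK (x : bits n) : involutive (@Defs.omap n w x).
Proof. by move=> [[i b] z]; rewrite /Defs.omap /= addbK. Qed.

Lemma apply_oracle (x : bits n) (v : vec R (QS n w)) s :
  apply (oracle R x) v s = v (Defs.omap x s).
Proof.
rewrite /apply /oracle.
rewrite (eq_bigr (fun t => ((Defs.omap x s) == t)%:R * v t)) ?sum_delta' //.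
move=> t _; congr (_%:R * _).
by rewrite -{1}(omapK x s) (inj_eq (inv_inj (omapK x))).
Qed.

Lemma sumQS (V : nmodType) (F : QS n w -> V) :
  \sum_t F t = \sum_(i : 'I_n) \sum_(b : bool) \sum_(z : 'I_w) F ((i, b), z).
Proof. by rewrite pair_bigA pair_bigA; apply: eq_bigr => -[[i b] z] _. Qed.

End Q.

Section OR.
Variable R : realType.
Local Notation C := (R[i]).
Variable n : nat.
Local Notation N := n.+1.
Local Notation d := ((n.*2.+1)%:R : R).

Definition pOR (s : QS N 2) : R :=
  if s.1.2 then 0 else if s.2 == ord0 then 1 / d
  else if s.1.1 == ord0 then n%:R / d else 0.
Definition psi_or : vec R (QS N 2) := fun s => ((Num.sqrt (pOR s))%:C)%C.
Definition acc_or : pred (QS N 2) := fun s => (s.2 != ord0) || s.1.2.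
Definition U_or : nat -> op R (QS N 2) := fun _ => @idop R _.

Lemma d_gt0 : 0 < d. Proof. by rewrite ltr0n. Qed.

Lemma orP_ge0 s : 0 <= pOR s.
Proof.
rewrite /pOR; case: ifP => _ //; case: ifP => _; first by rewrite divr_ge0 // ltW // d_gt0.
by case: ifP => _ //; rewrite divr_ge0 // ltW // d_gt0.
Qed.

Lemma psi_or2 s : `|psi_or s| ^+ 2 = ((pOR s)%:C)%C.
Proof. exact: sqC (orP_ge0 s). Qed.

Lemma or_sum (x : bits N) :
  \sum_(s | acc_or s) pOR (Defs.omap x s) = \sum_i (x i)%:R / d + n%:R / d.
Proof.
rewrite big_mkcond /= sumQS.
transitivity (\sum_i ((x i)%:R / d + (ord0 == i)%:R * (n%:R / d))); last first.
  by rewrite big_split /= sum_delta'.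
apply: eq_bigr => i _.
rewrite big_bool !big_ord_recl !big_ord0 /= /pOR /Defs.omap /=.
rewrite [ord0 == _]eq_sym; case: (x i); case: (i == ord0); rewrite /= ?mulr1n ?mulr0n ?mul0r ?mul1r ?add0r ?addr0 //.
Qed.

Lemma qrun1 (U : nat -> op R (QS N 2)) (x : bits N) psi0 :
  (forall j, U j = @idop R _) -> forall s, qrun U x psi0 1 s = psi0 (Defs.omap x s).
Proof. by move=> HU s; rewrite /= !HU apply_id apply_oracle apply_id. Qed.

Lemma or_alg : qalg_for Unbounded (fun _ : bits N => true) (fun x : bits N => [exists i, x i])
  1 U_or psi_or acc_or.
Proof.
split.
  split; last by move=> j _; exact: unitary_id.
  rewrite /unit_vec (eq_bigr _ (fun s _ => psi_or2 s)) sumC.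
  have -> : \sum_s pOR s = 1; last by [].
  rewrite sumQS.
  transitivity (\sum_(i : 'I_N) (1 / d + (ord0 == i)%:R * (n%:R / d))).
    apply: eq_bigr => i _; rewrite big_bool !big_ord_recl !big_ord0 /= /pOR /=.
    by rewrite [ord0 == _]eq_sym; case: (i == ord0); rewrite /= ?mulr1n ?mulr0n ?mul0r ?mul1r ?add0r ?addr0.
  rewrite big_split /= sum_delta' sumr_const card_ord -mulr_natr.
  have dn : d != 0 by rewrite pnatr_eq0.
  move: dn; rewrite -[n.*2.+1]addn1 -addnn !natrD => dn.
  by field.
move=> x _.
have E : forall s, qrun U_or x psi_or 1 s = psi_or (Defs.omap x s).
  by move=> s; apply: qrun1.
rewrite /qaccept /prob (eq_bigr _ (fun s _ => congr1 (fun v => `|v| ^+ 2) (E s))).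
rewrite (eq_bigr _ (fun s _ => psi_or2 _)) sumC or_sum /= half_C !ltcR.
have dp := d_gt0.
have nd : 0 <= n%:R / d by rewrite divr_ge0 // ltW.
case: existsP => [[i1 Hi1]|Hn].
  have S1 : 1 / d <= \sum_i (x i)%:R / d.
    rewrite (bigD1 i1) //= Hi1 lerDl sumr_ge0 // => i _.
    by rewrite divr_ge0 // ltW.
  apply: (lt_le_trans _ (lerD S1 (lexx (n%:R / d)))).
  rewrite -mulrDl ltr_pdivlMr //.
  move: dp; rewrite -[n.*2.+1]addn1 -addnn !natrD => dp.
  have n0 : 0 <= (n%:R : R) by [].
  lra.
rewrite big1 ?add0r; last first.
  move=> i _; case: (boolP (x i)) => Hx; last by rewrite ?mulr0n ?mul0r.
  by case: Hn; exists i.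
rewrite ltr_pdivrMr //.
move: dp; rewrite -[n.*2.+1]addn1 -addnn !natrD => dp.
have n0 : 0 <= (n%:R : R) by [].
lra.
Qed.

End OR.

Section House.
Variable R : realType.
Variable T : finType.
Variable v : T -> R.
Variable k : R.
Hypothesis kN : k * (\sum_u v u ^+ 2) = 2.

Lemma householder s t :
  \sum_u ((u == s)%:R - k * v u * v s) * ((u == t)%:R - k * v u * v t) = (s == t)%:R :> R.
Proof.
transitivity (\sum_u ((s == u)%:R * (u == t)%:R - (s == u)%:R * (k * v s * v t)
   - (t == u)%:R * (k * v s * v t) + k ^+ 2 * v s * v t * v u ^+ 2)).
  apply: eq_bigr => u _.
  case: (eqVneq s u) => [Esu|hs]; [subst s|]; case: (eqVneq t u) => [Etu|ht]; [subst t| |subst t|];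
    rewrite ?eqxx ?(negbTE hs) ?(negbTE ht) ?[u == _]eq_sym ?(negbTE hs) ?(negbTE ht) ?eqxx /=;
    ring.
rewrite !big_split /= !sumrN !sum_delta' -mulr_sumr.
have -> : k ^+ 2 * v s * v t * (\sum_i v i ^+ 2) = 2 * k * v s * v t.
  transitivity ((k * \sum_u v u ^+ 2) * (k * v s * v t)); first by ring.
  by rewrite kN; ring.
ring.
Qed.

End House.

Section DJ.
Variable R : realType.
Local Notation C := (R[i]).
Variables (n m : nat).
Hypothesis m0 : (0 < m)%N.
Hypothesis mN : (m <= n.+1)%N.
Local Notation N := n.+1.

Definition chi (i : 'I_N) : R := (i < m)%:R.
Definition sgnR (b : bool) : R := if b then -1 else 1.
Definition cc : R := Num.sqrt (1 / (m.*2)%:R).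
Definition phiR (s : QS N 1) : R := chi s.1.1 * sgnR s.1.2 * cc.
Definition e0 : QS N 1 := ((ord0, false), ord0).
Definition vR (s : QS N 1) : R := phiR s - (s == e0)%:R.
Definition kk : R := 1 / (1 - cc).
Definition Hdj : op R (QS N 1) := fun s t => ((((s == t)%:R - kk * vR s * vR t)%:C)%C).
Definition U_dj : nat -> op R (QS N 1) := fun j => if j == 0%N then @idop R _ else Hdj.
Definition psi_dj : vec R (QS N 1) := fun s => ((phiR s)%:C)%C.
Definition acc_dj : pred (QS N 1) := fun s => s == e0.
Definition Gs (x : bits N) : R := \sum_i chi i * sgnR (x i).

Lemma m2_gt0 : 0 < (m.*2)%:R :> R.
Proof. by rewrite ltr0n double_gt0. Qed.

Lemma cc2 : cc ^+ 2 = 1 / (m.*2)%:R.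
Proof. by rewrite sqr_sqrtr // divr_ge0 // ltW // m2_gt0. Qed.

Lemma cc_ge0 : 0 <= cc. Proof. exact: sqrtr_ge0. Qed.

Lemma cc_lt1 : cc < 1.
Proof.
rewrite /cc -[X in _ < X]sqrtr1 ltr_sqrt ?ltr01 //.
rewrite ltr_pdivrMr ?m2_gt0 // mul1r ltr1n.
by rewrite -addnn (leq_add m0).
Qed.

Lemma sum_chi (h : nat -> R) : \sum_(i : 'I_N) chi i * h i = \sum_(j < m) h j.
Proof.
rewrite (big_ord_widen N h mN) [RHS]big_mkcond /=; apply: eq_bigr => i _.
by rewrite /chi; case: (i < m)%N; rewrite ?mul1r ?mul0r.
Qed.

Lemma chi2 i : chi i ^+ 2 = chi i.
Proof. by rewrite /chi; case: (i < m)%N; rewrite ?expr1n ?expr0n. Qed.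

Lemma sum_phi2 : \sum_s phiR s ^+ 2 = 1.
Proof.
rewrite sumQS.
transitivity (\sum_(i : 'I_N) chi i * (2 * cc ^+ 2)).
  apply: eq_bigr => i _; rewrite big_bool !big_ord1 /phiR /= .
  by transitivity (chi i ^+ 2 * (2 * cc ^+ 2)); [ring | rewrite chi2].
rewrite (sum_chi (fun _ => 2 * cc ^+ 2)) sumr_const card_ord cc2.
rewrite -mulr_natr -[m.*2]muln2 natrM.
have mp : (m%:R : R) != 0 by rewrite pnatr_eq0 -lt0n.
by field.
Qed.

Lemma m_neq0 : (m%:R : R) != 0.
Proof. by rewrite pnatr_eq0 -lt0n. Qed.

Lemma inner_phi (x : bits N) :
  \sum_s phiR s * phiR (Defs.omap x s) = Gs x / m%:R.
Proof.
rewrite sumQS.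
transitivity (\sum_(i : 'I_N) chi i * sgnR (x i) * (2 * cc ^+ 2)).
  apply: eq_bigr => i _; rewrite big_bool !big_ord1 /phiR /Defs.omap /=.
  transitivity (chi i ^+ 2 * sgnR (x i) * (2 * cc ^+ 2)); last by rewrite chi2.
  by case: (x i); rewrite /sgnR /=; ring.
rewrite -mulr_suml cc2 -/(Gs x) -[m.*2]muln2 natrM.
have := m_neq0; move=> mp; by field.
Qed.

Lemma phi_e0 : phiR e0 = cc.
Proof. by rewrite /phiR /e0 /chi /= m0 /sgnR !mul1r. Qed.

Lemma sum_v2 : \sum_s vR s ^+ 2 = 2 - 2 * cc.
Proof.
transitivity (\sum_s (phiR s ^+ 2 - 2 * ((e0 == s)%:R * phiR s) + (e0 == s)%:R * 1)).
  apply: eq_bigr => s _; rewrite /vR [s == e0]eq_sym.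
  by case: (e0 == s); rewrite /=; ring.
rewrite big_split /= sumrB sum_phi2 -mulr_sumr !sum_delta' phi_e0; ring.
Qed.

Lemma kN : kk * (\sum_s vR s ^+ 2) = 2.
Proof.
rewrite sum_v2 /kk.
have : 1 - cc != 0 by rewrite subr_eq0 eq_sym lt_eqF // cc_lt1.
move=> H; by field.
Qed.

Lemma amp (x : bits N) :
  \sum_t phiR t * phiR (Defs.omap x t) = Gs x / m%:R ->
  \sum_t ((e0 == t)%:R - kk * vR e0 * vR t) * phiR (Defs.omap x t) = Gs x / m%:R.
Proof.
move=> Hin.
transitivity (\sum_t ((e0 == t)%:R * phiR (Defs.omap x t))
   - kk * vR e0 * (\sum_t phiR t * phiR (Defs.omap x t) - \sum_t (e0 == t)%:R * phiR (Defs.omap x t))).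
  rewrite -sumrB mulr_sumr -sumrB; apply: eq_bigr => t _; rewrite /vR [t == e0]eq_sym; ring.
rewrite Hin sum_delta' /vR eqxx phi_e0 /kk.
have : 1 - cc != 0 by rewrite subr_eq0 eq_sym lt_eqF // cc_lt1.
move=> H; rewrite /= mulr1n; field; by rewrite ?m_neq0.
Qed.

Lemma dj_accept (x : bits N) :
  qaccept 1 U_dj psi_dj acc_dj x = ((((Gs x / m%:R) ^+ 2)%:C)%C).
Proof.
rewrite /qaccept /prob /acc_dj big_pred1_eq.
have -> : qrun U_dj x psi_dj 1 e0 = (((Gs x / m%:R))%:C)%C; last by rewrite normR2.
rewrite /= /U_dj /=.
rewrite /apply.
under eq_bigr => t _ do rewrite -/(apply (oracle R x) _ t) apply_oracle -/(apply (@idop R _) psi_dj _) apply_id.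
rewrite /Hdj /psi_dj (eq_bigr (fun t => ((((e0 == t)%:R - kk * vR e0 * vR t) * phiR (Defs.omap x t))%:C)%C)).
  by rewrite sumC amp // inner_phi.
by move=> t _; rewrite -rmorphM.
Qed.

Lemma dj_valid : valid_qalg 1 U_dj psi_dj.
Proof.
split.
  rewrite /unit_vec (eq_bigr (fun s => (((phiR s) ^+ 2)%:C)%C)); last by move=> s _; rewrite normR2.
  by rewrite sumC sum_phi2.
move=> j _; rewrite /U_dj; case: (j == 0%N); first exact: unitary_id.
move=> s t; rewrite /Hdj (eq_bigr (fun u => ((((u == s)%:R - kk * vR u * vR s) * ((u == t)%:R - kk * vR u * vR t))%:C)%C)).
  by rewrite sumC (householder kN) rmorph_nat.
by move=> u _; rewrite conjR rmorphM.
Qed.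

Definition Fdj (x : bits N) : bool := Gs x == m%:R.
Definition dom_dj (x : bits N) : bool := (Gs x == m%:R) || (Gs x == 0).

Lemma dj_val (x : bits N) : dom_dj x -> qaccept 1 U_dj psi_dj acc_dj x = (Fdj x)%:R.
Proof.
rewrite dj_accept /dom_dj /Fdj; case/orP => /eqP ->.
  by rewrite eqxx divff ?m_neq0 // expr1n rmorph1.
have : (0 : R) != m%:R by rewrite eq_sym m_neq0.
by move/negbTE ->; rewrite mul0r expr0n /= rmorph0.
Qed.

Lemma dj_exact : qalg_for Exact dom_dj Fdj 1 U_dj psi_dj acc_dj.
Proof. by split; [exact: dj_valid | move=> x Hx; rewrite /= dj_val]. Qed.

Lemma dj_nondet : qalg_for Nondet dom_dj Fdj 1 U_dj psi_dj acc_dj.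
Proof.
split; first exact: dj_valid.
move=> x Hx; rewrite /= dj_val //; case: (Fdj x) => /=; by rewrite ?ltr01 ?ltxx.
Qed.

End DJ.


Lemma ln_pow2 (R : realType) (Nn p : nat) : (0 < Nn)%N -> (Nn <= 2 ^ p)%N ->
  ln (Nn%:R : R) <= p%:R * ln 2%:R.
Proof.
move=> N0 Np.
have : (Nn%:R : R) <= (2%:R) ^+ p by rewrite -natrX ler_nat.
rewrite -ler_ln ?posrE ?ltr0n ?exprn_gt0 ?ltr0n // lnXn ?ltr0n // => H.
by rewrite mulr_natl.
Qed.

Lemma ln_pow2' (R : realType) (Nn p : nat) : (2 ^ p <= Nn)%N ->
  p%:R * ln 2%:R <= ln (Nn%:R : R).
Proof.
move=> Np.
have N0 : (0 < Nn)%N by apply: leq_trans Np; rewrite expn_gt0.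
have : (2%:R : R) ^+ p <= Nn%:R by rewrite -natrX ler_nat.
rewrite -ler_ln ?posrE ?ltr0n ?exprn_gt0 ?ltr0n // lnXn ?ltr0n // => H.
by rewrite mulr_natl.
Qed.

Lemma asymp (R : realType) (Cc Dn : R) (Nn k : nat) : 0 < Cc ->
  k%:R <= Cc * Dn * 1%:R -> (Nn <= 2 ^ (k.*2 + 5))%N -> (2 ^ 10 <= Nn)%N ->
  1 / (4%:R * Cc * ln 2%:R) * ln (Nn%:R : R) <= Dn.
Proof.
move=> C0 kD hN hN'.
have l0 : 0 < ln (2%:R : R) by apply: ln_gt0; rewrite ltr1n.
have N0 : (0 < Nn)%N by apply: leq_trans hN'; rewrite expn_gt0.
have h1 := ln_pow2 R N0 hN.
have h2 := ln_pow2' R hN'.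
set L := ln (Nn%:R : R) in h1 h2 *; set l := ln (2%:R : R) in l0 h1 h2 *.
have u1 : L / l <= (k.*2 + 5)%:R by rewrite ler_pdivrMr.
have u2 : 10%:R <= L / l by rewrite ler_pdivlMr.
move: u1; rewrite natrD -muln2 natrM => u1.
have u3 : L / l <= 4%:R * k%:R by lra.
have -> : 1 / (4%:R * Cc * l) * L = (L / l) / (4%:R * Cc).
  by field; rewrite ?lt0r_neq0.
rewrite ler_pdivrMr ?mulr_gt0 ?ltr0n //.
move: kD; rewrite mulr1 => kD.
nra.
Qed.


Section Had.
Variable R : realType.
Variable kd : nat.
Local Notation T := {ffun 'I_kd -> bool}.

Definition par (a b : T) : bool := \big[addb/false]_(j < kd) (a j && b j).
Definition flip (j0 : 'I_kd) (b : T) : T := [ffun j => b j (+) (j == j0)].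

Lemma flipK j0 : involutive (flip j0).
Proof. by move=> b; apply/ffunP => j; rewrite !ffunE addbK. Qed.

Lemma par_flip a b j0 : par a (flip j0 b) = par a b (+) a j0.
Proof.
rewrite /par (eq_bigr (fun j => (a j && b j) (+) (a j && (j == j0)))); last first.
  by move=> j _; rewrite ffunE andb_addr.
rewrite big_split /=; congr (_ (+) _).
rewrite (bigD1 j0) //= eqxx andbT big1 ?addbF // => j /negbTE ->.
by rewrite andbF.
Qed.

Lemma had_sum (a a' : T) : a != a' ->
  \sum_(b : T) sgnR R (par a b (+) par a' b) = 0.
Proof.
move=> neq.
have [j0 Hj0] : exists j0, a j0 != a' j0.
  apply/existsP; apply: contraR neq; rewrite negb_exists => /forallP H.
  by apply/eqP/ffunP => j; apply/eqP; have := H j; rewrite negbK.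
set S := \sum_b _.
have : S = - S.
  rewrite {1}/S (reindex_inj (can_inj (flipK j0))) /= -sumrN.
  apply: eq_bigr => b _; rewrite !par_flip.
  have -> : par a b (+) a j0 (+) (par a' b (+) a' j0) = ~~ (par a b (+) par a' b).
    by move: Hj0; case: (a j0); case: (a' j0); case: (par a b); case: (par a' b).
  by rewrite /sgnR; case: (_ (+) _); rewrite ?opprK.
move=> H; lra.
Qed.

Variable n : nat.
Hypothesis TN : (#|T| <= n.+1)%N.

Definition code (a : T) : bits n.+1 :=
  [ffun i : 'I_n.+1 => if insub (val i) : option 'I_#|T| is Some o then par a (enum_val o) else false].

Lemma code_G (a a' : T) :
  Gs R #|T| (bxor (code a) (code a')) = if a == a' then #|T|%:R else 0.
Proof.
pose h (j : nat) : R := sgnR R (if insub j : option 'I_#|T| is Some o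
   then par a (enum_val o) (+) par a' (enum_val o) else false).
rewrite /Gs (eq_bigr (fun i => chi R #|T| i * h i)); last first.
  move=> i _; rewrite /h !ffunE; by case: (insub (val i) : option 'I_#|T|).
rewrite (sum_chi TN h).
rewrite (eq_bigr (fun o : 'I_#|T| => sgnR R (par a (enum_val o) (+) par a' (enum_val o)))); last first.
  by move=> o _; rewrite /h valK.
rewrite -(to_ord (fun b => sgnR R (par a b (+) par a' b))).
case: eqP => [<-|/eqP neq]; last exact: had_sum.
by rewrite (eq_bigr (fun _ => 1)) ?sumr_const // => b _; rewrite addbb.
Qed.

End Had.

From mathcomp Require Import zify.

Lemma natb1 k x : (x <= (2 ^ k.+1 * 2 ^ k.+1).*2)%N -> (x.*2 <= 2 ^ (k.*2 + 5))%N.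
Proof.
rewrite expnD -[k.*2]addnn expnD !expnS.
have : (0 < 2 ^ k)%N by rewrite expn_gt0.
set X := (2 ^ k)%N; move=> X0 H.
nia.
Qed.

Lemma natb2 k x : (x <= ((2 ^ k.+1 * 2 ^ k.+1).*2).*2.+1)%N -> (x <= 2 ^ (k.*2 + 5))%N.
Proof.
rewrite expnD -[k.*2]addnn expnD !expnS.
have : (0 < 2 ^ k)%N by rewrite expn_gt0.
set X := (2 ^ k)%N; move=> X0 H.
nia.
Qed.

Lemma card_T kd : #|{ffun 'I_kd -> bool}| = (2 ^ kd)%N.
Proof. by rewrite card_ffun card_bool card_ord. Qed.

Section Main.
Variable R : realType.
Local Notation C := (R[i]).

Lemma pacc_ge0 n a b k (UA : nat -> bits n -> op R (AS a)) (UB : nat -> bits n -> op R (BS b)) accA accB x y :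
  0 <= paccept k UA UB accA accB x y.
Proof. by rewrite /paccept /prob sumr_ge0 // => s _; rewrite exprn_ge0 // normr_ge0. Qed.

Lemma diag_part md (D : nat -> R) Cc : (md = Exact \/ md = Nondet) ->
  simulation md bxor true D Cc ->
  forall n kd : nat, (2 ^ kd <= n.+1)%N ->
  exists k : nat, k%:R <= Cc * D n.+1 * 1%:R /\ (2 ^ kd <= (2 ^ k.+1 * 2 ^ k.+1).*2)%N.
Proof.
move=> Hmd Hsim n kd HT.
have TN : (#|{ffun 'I_kd -> bool}| <= n.+1)%N by rewrite card_T.
have m0 : (0 < #|{ffun 'I_kd -> bool}|)%N by rewrite card_T expn_gt0.
set m := #|{ffun 'I_kd -> bool}| in TN m0.
have Halg : qalg_for md (dom_dj R m) (Fdj R m) 1 (U_dj R m) (psi_dj R m) (@acc_dj n).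
  by case: Hmd => ->; [exact: dj_exact | exact: dj_nondet].
have [a [b [k [UA [UB [accA [accB [Hv Hk Hc]]]]]]]] :=
  Hsim n.+1 (dom_dj R m) (Fdj R m) (fun H => ltac:(done)) 1%N 1%N _ _ _ Halg.
exists k; split => //.
rewrite -card_T.
apply: (@comm_lb_diag R n.+1 a b k UA UB accA accB m
   (fun j => code n (enum_val j)) (fun j => code n (enum_val j))).
  move=> i j ij.
  have ne : enum_val i != enum_val j :> {ffun 'I_kd -> bool}.
    by apply: contra ij => /eqP /enum_val_inj ->.
  have Hdom : dom_dj R m (bxor (code n (enum_val i)) (code n (enum_val j))).
    by rewrite /dom_dj code_G // (negbTE ne) eqxx orbT.
  have HF : Fdj R m (bxor (code n (enum_val i)) (code n (enum_val j))) = false.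
    by rewrite /Fdj code_G // (negbTE ne) eq_sym pnatr_eq0 eqn0Ngt m0.
  have := Hc _ _ Hdom; rewrite HF.
  case: Hmd => -> /= H; first by rewrite H.
  by move: H; rewrite lt0r pacc_ge0 andbT => /negbFE /eqP.
move=> i.
have Hdom : dom_dj R m (bxor (code n (enum_val i)) (code n (enum_val i))).
  by rewrite /dom_dj code_G // eqxx eqxx.
have HF : Fdj R m (bxor (code n (enum_val i)) (code n (enum_val i))) = true.
  by rewrite /Fdj code_G // eqxx eqxx.
have := Hc _ _ Hdom; rewrite HF.
case: Hmd => -> /= H; first by rewrite H oner_eq0.
by rewrite lt0r_neq0 // H.
Qed.

Lemma vc_part (D : nat -> R) Cc : simulation Unbounded band false D Cc ->
  forall n, exists k : nat, k%:R <= Cc * D n.+1 * 1%:R /\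
    (n.+1 <= ((2 ^ k.+1 * 2 ^ k.+1).*2).*2.+1)%N.
Proof.
move=> Hsim n.
have [a [b [k [UA [UB [accA [accB [Hv Hk Hc]]]]]]]] :=
  Hsim n.+1 _ _ (fun _ _ => erefl) 2%N 1%N _ _ _ (or_alg R n).
exists k; split => //.
apply: (@comm_lb_vc R n.+1 a b k UA UB accA accB (fun i => [ffun j => j == i])).
move=> i y; have := Hc ([ffun j => j == i]) y erefl.
have -> : [exists j, band [ffun j => j == i] y j] = y i.
  apply/existsP/idP => [[j]|yi]; first by rewrite !ffunE => /andP [/eqP -> ].
  by exists i; rewrite !ffunE eqxx.
by [].
Qed.

End Main.

Unset Implicit Arguments.

Theorem theorem4 (R : realType) :
  [/\ (forall (D : nat -> R) (Cc : R), (forall n, 0 < D n) -> 0 < Cc ->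
         simulation Nondet bxor true D Cc -> Omega_log D),
      (forall (D : nat -> R) (Cc : R), (forall n, 0 < D n) -> 0 < Cc ->
         simulation Exact bxor true D Cc -> Omega_log D) &
      (forall (D : nat -> R) (Cc : R), (forall n, 0 < D n) -> 0 < Cc ->
         simulation Unbounded band false D Cc -> Omega_log D)].
Proof.
have cpos : forall Cc : R, 0 < Cc -> 0 < 1 / (4%:R * Cc * ln 2%:R).
  move=> Cc C0; rewrite divr_gt0 // !mulr_gt0 // ?ltr0n //.
  by apply: ln_gt0; rewrite ltr1n.
have diag_om : forall md (D : nat -> R) Cc, (md = Exact \/ md = Nondet) -> 0 < Cc ->
    simulation md bxor true D Cc -> Omega_log D.
  move=> md D Cc Hmd C0 Hsim.
  exists (1 / (4%:R * Cc * ln 2%:R)); split; first exact: cpos.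
  exists (2 ^ 10)%N => -[|n] Hn; first by [].
  have [k [Hk Hb]] := diag_part Hmd Hsim (trunc_logP (isT : (1 < 2)%N) (ltn0Sn n)).
  apply: (asymp C0 Hk _ Hn).
  apply: leq_trans (natb1 Hb); apply: ltnW.
  by rewrite -mul2n -expnS trunc_log_ltn.
split.
- by move=> D Cc _ C0; apply: (diag_om Nondet) => //; right.
- by move=> D Cc _ C0; apply: (diag_om Exact) => //; left.
move=> D Cc _ C0 Hsim.
exists (1 / (4%:R * Cc * ln 2%:R)); split; first exact: cpos.
exists (2 ^ 10)%N => -[|n] Hn; first by [].
have [k [Hk Hb]] := vc_part Hsim n.
exact: (asymp C0 Hk (natb2 Hb) Hn).
Qed.
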